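(* Let $p$ be an odd prime, $q=p^m$, $q=et+1$ with integers $e\geq 2,t\geq 1$, $R_{e,q}=\mathbb{F}_q[u]/\langle u^e-1\rangle$ with orthogonal idempotents $\mu_1,\dots,\mu_e$ (see context). Let $\mathcal{C}=\bigoplus_{i=1}^e\mu_i\mathcal{C}_i$ be a cyclic code of length $n$ over $R_{e,q}$. Then $\mathcal{C}$ is an LCD code if and only if $\mathcal{C}_i$ is an LCD cyclic code of length $n$ over $\mathbb{F}_q$ for every $1\leq i\leq e$.
   Context: Write $u^e-1=\prod_{i=1}^e(u-\alpha_i)$ over $\mathbb{F}_q$, $G_i=u-\alpha_i$, $\widehat{G}_i=(u^e-1)/G_i$, $z_iG_i+h_i\widehat{G}_i=1$, $\mu_i=h_i\widehat{G}_i$; these are pairwise orthogonal idempotents summing to $1$. For a linear code $\mathcal{C}\subseteq R_{e,q}^n$, $\mathcal{C}_i=\{s_i\in\mathbb{F}_q^n:\exists\, s_j\ (j\neq i)\text{ with }\sum_{j}s_j\mu_j\in\mathcal{C}\}$ and $\mathcal{C}=\bigoplus_i\mu_i\mathcal{C}_i$. A linear code $\mathcal{C}$ is LCD (linear complementary dual) if $\mathcal{C}\cap\mathcal{C}^\perp=\{0\}$, the dual taken with respect to the Euclidean inner product. *)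

(* Defs.v *)
From HB Require Import structures.
From mathcomp Require Import all_boot all_order all_algebra.
Set Implicit Arguments. Unset Strict Implicit. Unset Printing Implicit Defensive.
Import GRing.Theory.
Local Open Scope ring_scope.

Section Codes.
Variables (R : comNzRingType) (n : nat).

Definition linear_code (C : 'rV[R]_n -> Prop) : Prop :=
  [/\ C 0, (forall x y, C x -> C y -> C (x + y)) &
      (forall (r : R) x, C x -> C (r *: x))].

Definition cshift (x : 'rV[R]_n) : 'rV[R]_n := \row_(j < n) x 0 (ord_pred j).

Definition cyclic_code (C : 'rV[R]_n -> Prop) : Prop :=
  linear_code C /\ (forall x, C x -> C (cshift x)).

Definition euclid (x y : 'rV[R]_n) : R := \sum_(j < n) x 0 j * y 0 j.

Definition dual_code (C : 'rV[R]_n -> Prop) : 'rV[R]_n -> Prop :=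
  fun y => forall x, C x -> euclid x y = 0.

Definition LCD_code (C : 'rV[R]_n -> Prop) : Prop :=
  linear_code C /\ (forall x, C x -> dual_code C x -> x = 0).
End Codes.

Definition Req (F : fieldType) (e : nat) := {poly %/ ('X^e - 1 : {poly F})}.

Definition embF (F : fieldType) (e : nat) (c : F) : Req F e :=
  in_qpoly ('X^e - 1) c%:P.

Definition Ghat (F : fieldType) (e : nat) (alpha : 'I_e -> F) (i : 'I_e) : {poly F} :=
  ('X^e - 1) %/ ('X - (alpha i)%:P).

Definition mu (F : fieldType) (e : nat) (alpha : 'I_e -> F)
  (h : 'I_e -> {poly F}) (i : 'I_e) : Req F e :=
  in_qpoly ('X^e - 1) (h i * Ghat alpha i).

Definition comp_code (F : fieldType) (e n : nat) (alpha : 'I_e -> F)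
  (h : 'I_e -> {poly F}) (C : 'rV[Req F e]_n -> Prop) (i : 'I_e) :
  'rV[F]_n -> Prop :=
  fun s => exists S : 'I_e -> 'rV[F]_n,
    S i = s /\ C (\sum_(j < e) mu alpha h j *: map_mx (@embF F e) (S j)).

(* Main.v *)
Require Import Defs.
From HB Require Import structures.
From mathcomp Require Import all_boot all_order all_algebra.
Set Implicit Arguments. Unset Strict Implicit. Unset Printing Implicit Defensive.
Import GRing.Theory.
Local Open Scope ring_scope.

Section Ev.
Variables (F : fieldType) (e : nat) (alpha : 'I_e -> F) (z h : 'I_e -> {poly F}).
Hypothesis he : (0 < e)%N.
Hypothesis hfact : ('X^e - 1 : {poly F}) = \prod_(i < e) ('X - (alpha i)%:P).
Hypothesis hbez : forall i : 'I_e, z i * ('X - (alpha i)%:P) + h i * Ghat alpha i = 1.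

Definition ev (a : F) (r : Req F e) : F := (r : {poly F}).[a].

Lemma mkd : mk_monic ('X^e - 1 : {poly F}) = 'X^e - 1.
Proof.
rewrite /mk_monic.
have -> : ('X^e - 1 : {poly F}) = 'X^e - 1%:P by rewrite polyC1.
by rewrite size_XnsubC // monicXnsubC // ltnS he.
Qed.

Lemma root_alpha k : ('X^e - 1 : {poly F}).[alpha k] = 0.
Proof.
rewrite hfact horner_prod (bigD1 k) //= !hornerE subrr mul0r.
by [].
Qed.

Lemma ev_in k p : ev (alpha k) (in_qpoly ('X^e - 1) p) = p.[alpha k].
Proof.
rewrite /ev /= mkd.
have md : ('X^e - 1 : {poly F}) \is monic.
  by rewrite -polyC1 monicXnsubC.
rewrite {2}(Pdiv.RingMonic.rdivp_eq md p) hornerD hornerM root_alpha mulr0 add0r.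
by [].
Qed.

Lemma evD a x y : ev a (x + y) = ev a x + ev a y.
Proof. by rewrite /ev /= hornerD. Qed.

Lemma ev0 a : ev a 0 = 0.
Proof. by rewrite /ev /= horner0. Qed.

Lemma evB a x y : ev a (x - y) = ev a x - ev a y.
Proof. by rewrite /ev /= hornerD hornerN. Qed.

Lemma evM k x y : ev (alpha k) (x * y) = ev (alpha k) x * ev (alpha k) y.
Proof.
have -> : x * y = in_qpoly ('X^e - 1) ((x : {poly F}) * y) by [].
by rewrite ev_in hornerM.
Qed.

Lemma ev_sum a I (r : seq I) (P : pred I) (G : I -> Req F e) :
  ev a (\sum_(i <- r | P i) G i) = \sum_(i <- r | P i) ev a (G i).
Proof. exact: (big_morph _ (evD a) (ev0 a)). Qed.

Lemma ev_emb k c : ev (alpha k) (embF e c) = c.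
Proof. by rewrite /embF ev_in hornerC. Qed.

Lemma Ghat_prod j : Ghat alpha j = \prod_(l < e | l != j) ('X - (alpha l)%:P).
Proof. by rewrite /Ghat hfact (bigD1 j) //= mulKp // polyXsubC_eq0. Qed.

Lemma ev_mu k j : ev (alpha k) (mu alpha h j) = (j == k)%:R.
Proof.
rewrite /mu ev_in hornerM.
case: eqP => [<-|/eqP njk].
  have := congr1 (fun p => p.[alpha j]) (hbez j).
  by rewrite /= hornerD !hornerM !hornerE subrr mulr0 add0r.
rewrite Ghat_prod horner_prod (bigD1 k) /=; last by rewrite eq_sym.
by rewrite hornerXsubC subrr mul0r mulr0.
Qed.

Lemma alpha_inj : injective alpha.
Proof.
move=> i j hij; apply/eqP; apply/negP => /negP nij.
have := ev_mu i j; rewrite hij ev_mu eqxx eq_sym (negbTE nij).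
by move/eqP; rewrite oner_eq0.
Qed.

Lemma ev_inj (r : Req F e) : (forall k, ev (alpha k) r = 0) -> r = 0.
Proof.
move=> hr; apply: val_inj => /=.
apply/eqP; apply/negPn/negP => r0.
have := max_poly_roots r0 (rs := [seq alpha k | k <- enum 'I_e]).
rewrite map_inj_uniq ?enum_uniq //; last exact: alpha_inj.
have -> : all (root (r : {poly F})) [seq alpha k | k <- enum 'I_e].
  by apply/allP => x /mapP [k _ ->]; apply/eqP; exact: hr.
rewrite size_map -cardE card_ord.
have hs := size_mk_monic r.
have E : size (mk_monic ('X^e - 1 : {poly F})) = e.+1.
  by rewrite mkd -polyC1 size_XnsubC.
have {}hs : (size (r : {poly F}) <= e)%N by rewrite -ltnS -E.
by move=> /(_ isT isT) H; have := leq_trans H hs; rewrite ltnn.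
Qed.

Lemma ev_ext (x y : Req F e) : (forall k, ev (alpha k) x = ev (alpha k) y) -> x = y.
Proof.
move=> hxy; apply/eqP; rewrite -subr_eq0; apply/eqP/ev_inj => k.
by rewrite evB hxy subrr.
Qed.

End Ev.

Section Vec.
Variables (F : fieldType) (e : nat) (alpha : 'I_e -> F) (z h : 'I_e -> {poly F}).
Hypothesis he : (0 < e)%N.
Hypothesis hfact : ('X^e - 1 : {poly F}) = \prod_(i < e) ('X - (alpha i)%:P).
Hypothesis hbez : forall i : 'I_e, z i * ('X - (alpha i)%:P) + h i * Ghat alpha i = 1.
Variable n : nat.

Definition comp (k : 'I_e) (x : 'rV[Req F e]_n) : 'rV[F]_n := map_mx (ev (alpha k)) x.

Lemma comp_ext x y : (forall k, comp k x = comp k y) -> x = y.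
Proof.
move=> H; apply/matrixP => i j; apply: (ev_ext he hfact hbez) => k.
by move/matrixP: (H k) => /(_ i j); rewrite !mxE.
Qed.

Lemma compD k x y : comp k (x + y) = comp k x + comp k y.
Proof. by apply/matrixP => i j; rewrite !mxE evD. Qed.

Lemma comp0 k : comp k 0 = 0.
Proof. by apply/matrixP => i j; rewrite !mxE ev0. Qed.

Lemma compZ k r x : comp k (r *: x) = ev (alpha k) r *: comp k x.
Proof. by apply/matrixP => i j; rewrite !mxE (evM he hfact). Qed.

Lemma comp_sum k (G : 'I_e -> 'rV[Req F e]_n) :
  comp k (\sum_(j < e) G j) = \sum_(j < e) comp k (G j).
Proof.
apply/matrixP => i l; rewrite mxE !summxE ev_sum.
by apply: eq_bigr => j _; rewrite mxE.
Qed.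

Lemma comp_emb k s : comp k (map_mx (@embF F e) s) = s.
Proof. by apply/matrixP => i j; rewrite !mxE (ev_emb he hfact). Qed.

Lemma comp_cshift k x : comp k (cshift x) = cshift (comp k x).
Proof. by apply/matrixP => i j; rewrite !mxE. Qed.

Lemma ev_euclid k x y : ev (alpha k) (euclid x y) = euclid (comp k x) (comp k y).
Proof.
rewrite /euclid ev_sum; apply: eq_bigr => j _.
by rewrite (evM he hfact) !mxE.
Qed.

Lemma comp_mu k i s :
  comp k (mu alpha h i *: map_mx (@embF F e) s) = (i == k)%:R *: s.
Proof. by rewrite compZ (ev_mu he hfact hbez) comp_emb. Qed.

Lemma comp_musum k (S : 'I_e -> 'rV[F]_n) :
  comp k (\sum_(j < e) mu alpha h j *: map_mx (@embF F e) (S j)) = S k.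
Proof.
rewrite comp_sum (bigD1 k) //= comp_mu eqxx scale1r big1 ?addr0 // => j njk.
by rewrite comp_mu (negbTE njk) scale0r.
Qed.

End Vec.

Lemma cshiftZ (R : comNzRingType) n (a : R) (x : 'rV[R]_n) : cshift (a *: x) = a *: cshift x.
Proof. by apply/matrixP => i j; rewrite !mxE. Qed.

Lemma euclid0r (R : comNzRingType) n (x : 'rV[R]_n) : euclid x 0 = 0.
Proof. by rewrite /euclid big1 // => j _; rewrite mxE mulr0. Qed.

Lemma main_thm (F : fieldType) (e : nat) (alpha : 'I_e -> F) (z h : 'I_e -> {poly F})
  (he : (0 < e)%N)
  (hfact : ('X^e - 1 : {poly F}) = \prod_(i < e) ('X - (alpha i)%:P))
  (hbez : forall i : 'I_e, z i * ('X - (alpha i)%:P) + h i * Ghat alpha i = 1)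
  n (C : 'rV[Req F e]_n -> Prop) (hC : cyclic_code C) :
  LCD_code C <->
  (forall i : 'I_e,
     cyclic_code (comp_code alpha h C i) /\ LCD_code (comp_code alpha h C i)).
Proof.
have [[C0 CD CZ] Csh] := hC.
pose Mi i (s : 'rV[F]_n) := mu alpha h i *: map_mx (@embF F e) s.
have cext := comp_ext he hfact hbez.
have cmu := comp_mu he hfact hbez.
have key i s : comp_code alpha h C i s <-> C (Mi i s).
  split.
    move=> [S [Si hS]].
    have -> : Mi i s = mu alpha h i *: \sum_(j < e) mu alpha h j *: map_mx (@embF F e) (S j).
      apply: cext => k; rewrite (compZ he hfact) (ev_mu he hfact hbez) (comp_musum he hfact hbez) cmu.
      by case: eqP => [<-|_]; rewrite ?Si ?scale0r.
    exact: CZ.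
  move=> hM; exists (fun j => if j == i then s else 0); split; first by rewrite eqxx.
  suff -> : \sum_(j < e) mu alpha h j *: map_mx (@embF F e) (if j == i then s else 0) = Mi i s by [].
  apply: cext => k; rewrite (comp_musum he hfact hbez) cmu eq_sym.
  by case: eqP => _; rewrite ?scale1r ?scale0r.
have B x k : C x -> comp_code alpha h C k (comp alpha k x).
  move=> hx; exists (fun j => comp alpha j x); split => //.
  suff -> : \sum_(j < e) mu alpha h j *: map_mx (@embF F e) (comp alpha j x) = x by [].
  by apply: cext => l; rewrite (comp_musum he hfact hbez).
split.
- move=> [_ LC] i.
  have lin : linear_code (comp_code alpha h C i).
    split.
    + apply/key; suff -> : Mi i 0 = 0 by [].
      by apply: cext => k; rewrite cmu comp0 scaler0.
    + move=> x y /key hx /key hy; apply/key.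
      suff -> : Mi i (x + y) = Mi i x + Mi i y by exact: CD.
      by apply: cext => k; rewrite compD !cmu scalerDr.
    + move=> c x /key hx; apply/key.
      suff -> : Mi i (c *: x) = embF e c *: Mi i x by exact: CZ.
      apply: cext => k; rewrite (compZ he hfact) !cmu (ev_emb he hfact).
      by rewrite !scalerA mulrC.
  split; first split => //.
    move=> x /key hx; apply/key.
    suff -> : Mi i (cshift x) = cshift (Mi i x) by exact: Csh.
    by apply: cext => k; rewrite comp_cshift !cmu cshiftZ.
  split => // s hs hd.
  have hM : C (Mi i s) by apply/key.
  have : Mi i s = 0.
    apply: LC => // w hw; apply: (ev_inj he hfact hbez) => k.
    rewrite (ev_euclid he hfact) cmu.
    case: (eqVneq i k) => [<-|nik].
      by rewrite scale1r; apply: hd; exact: B.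
    by rewrite scale0r euclid0r.
  by move/(congr1 (comp alpha i)); rewrite cmu eqxx scale1r comp0.
- move=> H; split => // x hx hd.
  apply: cext => k; rewrite comp0.
  have [_ [_ LCk]] := H k.
  apply: LCk; first exact: B.
  move=> r hr.
  have hM := (key k r).1 hr.
  have := hd _ hM.
  by move/(congr1 (ev (alpha k))); rewrite (ev_euclid he hfact) cmu eqxx scale1r ev0.
Qed.

Theorem theorem4p3 (F : finFieldType) (p m e t n : nat)
  (hp : prime p) (hodd : odd p) (hq : #|F| = (p ^ m)%N)
  (he : (2 <= e)%N) (ht : (1 <= t)%N) (het : (p ^ m)%N = (e * t + 1)%N)
  (alpha : 'I_e -> F)
  (hfact : ('X^e - 1 : {poly F}) = \prod_(i < e) ('X - (alpha i)%:P))
  (z h : 'I_e -> {poly F})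
  (hbez : forall i : 'I_e, z i * ('X - (alpha i)%:P) + h i * Ghat alpha i = 1)
  (C : 'rV[Req F e]_n -> Prop) (hC : cyclic_code C) :
  LCD_code C <->
  (forall i : 'I_e,
     cyclic_code (comp_code alpha h C i) /\ LCD_code (comp_code alpha h C i)).
Proof.
apply: (main_thm (z := z)) => //.
exact: leq_trans he.
Qed.
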